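(* Let $n\ge 1$. For each $1\le j\le n$, let $N^{(j)}$ be the smallest $k\ge 1$ such that $w_j$ and $w_{k+j}$ belong to the same class. Then $$\hat H_3=\frac1n\sum_{j=1}^n h_{N^{(j)}-1}$$ is an unbiased estimator of the Shannon entropy, i.e. $E(\hat H_3)=-\sum_{i=1}^M p_i\log(p_i)$.
   Context: Let $w_1,w_2,\dots$ be an infinite sequence of independent, identically distributed samples. Each sample belongs to exactly one of $M$ classes $C_1,\dots,C_M$, and $\Pr(w_k\in C_i)=p_i$, where $0<p_i\le 1$ and $\sum_{i=1}^M p_i=1$. The logarithm is the natural logarithm. The harmonic numbers are $h_n=\sum_{k=1}^n 1/k$ for $n\ge 1$, with $h_0=0$. *)

(* Defs.v *)
From Stdlib Require Import Reals Lra Lia List Arith.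
Import ListNotations.
Open Scope R_scope.

(* Classes C_1..C_M are encoded as 0..M-1; p i is the probability of class i. *)

Fixpoint harmonic (n : nat) : R :=
  match n with
  | O => 0
  | S m => harmonic m + / INR (S m)
  end.

Definition sumR (l : list R) : R := fold_right Rplus 0 l.

Definition entropy (M : nat) (p : nat -> R) : R :=
  - sumR (map (fun i => p i * ln (p i)) (seq 0 M)).

Fixpoint words (M K : nat) : list (list nat) :=
  match K with
  | O => [[]]
  | S K' => flat_map (fun w => map (fun c => w ++ [c]) (seq 0 M)) (words M K')
  end.

Definition word_prob (p : nat -> R) (w : list nat) : R :=
  fold_right (fun c acc => p c * acc) 1 w.

(* N^(j) computed from a finite prefix w = (w_1,...,w_K) (1-based j):
   the smallest k >= 1 with w_{j+k} = w_j, if it is visible in the prefix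
   (i.e. j + k <= K); None if not determined by the prefix. *)
Definition N_prefix (w : list nat) (j : nat) : option nat :=
  let c := nth (j - 1) w 0%nat in
  find (fun k => Nat.eqb (nth (j - 1 + k) w 0%nat) c) (seq 1 (length w - j)).

Fixpoint Ns_prefix (w : list nat) (n : nat) : option (list nat) :=
  match n with
  | O => Some []
  | S m => match Ns_prefix w m, N_prefix w (S m) with
           | Some l, Some k => Some (l ++ [k])
           | _, _ => None
           end
  end.

(* \hat H_3 = (1/n) sum_{j=1}^n h_{N^(j) - 1}, as a function of a prefix,
   truncated to 0 on the event that some N^(j) is not determined by it *)
Definition H3_trunc (n : nat) (w : list nat) : R :=
  match Ns_prefix w n with
  | Some l => / INR n * sumR (map (fun k => harmonic (k - 1)) l)
  | None => 0
  end.

(* E[\hat H_3 * 1{all N^(j) <= K - j}] : a finite sum over the first K samples *)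
Definition E_H3_trunc (M : nat) (p : nat -> R) (n K : nat) : R :=
  sumR (map (fun w => word_prob p w * H3_trunc n w) (words M K)).

(* Main.v *)
Require Import Defs.
From Stdlib Require Import Reals List Lra Lia Arith.
From Coquelicot Require Import Coquelicot.
Import ListNotations.
Open Scope R_scope.

Lemma sumR_app l1 l2 : sumR (l1 ++ l2) = sumR l1 + sumR l2.
Proof. induction l1; simpl; [ring| rewrite IHl1; ring]. Qed.

Lemma sumR_plus {A} (f g : A -> R) l :
  sumR (map (fun x => f x + g x) l) = sumR (map f l) + sumR (map g l).
Proof. induction l; simpl; [ring| rewrite IHl; ring]. Qed.

Lemma sumR_scal {A} (a : R) (f : A -> R) l :
  sumR (map (fun x => a * f x) l) = a * sumR (map f l).
Proof. induction l; simpl; [ring| rewrite IHl; ring]. Qed.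

Lemma sumR_opp {A} (f : A -> R) l :
  sumR (map (fun x => - f x) l) = - sumR (map f l).
Proof. induction l; simpl; [ring| rewrite IHl; ring]. Qed.

Lemma sumR_ext_in {A} (f g : A -> R) l :
  (forall x, In x l -> f x = g x) -> sumR (map f l) = sumR (map g l).
Proof. intros H; f_equal; apply map_ext_in; auto. Qed.

Lemma sumR_le_in {A} (f g : A -> R) l :
  (forall x, In x l -> f x <= g x) -> sumR (map f l) <= sumR (map g l).
Proof.
  induction l; simpl; intros H; [lra|].
  pose proof (H a (or_introl eq_refl)).
  assert (sumR (map f l) <= sumR (map g l)) by (apply IHl; auto). lra.
Qed.

Lemma sumR_const {A} (c : R) (l : list A) :
  sumR (map (fun _ => c) l) = INR (length l) * c.
Proof. induction l; simpl length; [simpl; ring|]. rewrite S_INR. simpl. rewrite IHl. ring. Qed.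

Lemma sumR_flat_map {A B} (f : B -> R) (g : A -> list B) l :
  sumR (map f (flat_map g l)) = sumR (map (fun x => sumR (map f (g x))) l).
Proof.
  induction l; simpl; [reflexivity|]. rewrite map_app, sumR_app, IHl. reflexivity.
Qed.

Lemma sumR_if (c : nat) (f : nat -> R) (l : list nat) :
  NoDup l -> In c l -> sumR (map (fun d => if Nat.eqb d c then f d else 0) l) = f c.
Proof.
  induction l as [|x l IH]; intros Hnd Hin; [destruct Hin|].
  inversion Hnd; subst. simpl.
  destruct (Nat.eqb_spec x c).
  - subst. assert (sumR (map (fun d => if Nat.eqb d c then f d else 0) l) = 0).
    { transitivity (sumR (map (fun _ => 0) l)).
      - apply sumR_ext_in. intros y Hy. destruct (Nat.eqb_spec y c); [subst; contradiction|]; auto.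
      - rewrite sumR_const; ring. }
    lra.
  - destruct Hin as [Hin|Hin]; [congruence|]. rewrite IH; auto. ring.
Qed.

Definition ES (M : nat) (p : nat -> R) (K : nat) (f : list nat -> R) : R :=
  sumR (map (fun w => word_prob p w * f w) (words M K)).

Lemma word_prob_fold p w a :
  fold_right (fun c acc => p c * acc) a w = word_prob p w * a.
Proof. induction w; simpl; [ring|]. unfold word_prob in *. simpl. rewrite IHw. ring. Qed.

Lemma ES_ext M p K f g : (forall w, f w = g w) -> ES M p K f = ES M p K g.
Proof. intros H. unfold ES. f_equal. apply map_ext. intros; rewrite H; auto. Qed.

Lemma ES0 M p f : ES M p 0 f = f [].
Proof. unfold ES, word_prob. simpl. ring. Qed.

Lemma ES_back M p K f :
  ES M p (S K) f = ES M p K (fun w => sumR (map (fun c => p c * f (w ++ [c])) (seq 0 M))).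
Proof.
  unfold ES. simpl. rewrite sumR_flat_map. f_equal. apply map_ext. intros w.
  rewrite map_map. rewrite <- sumR_scal. f_equal. apply map_ext. intros c.
  unfold word_prob at 1. rewrite fold_right_app. rewrite word_prob_fold. simpl. ring.
Qed.

Lemma ES_front M p K f :
  ES M p (S K) f = sumR (map (fun c => p c * ES M p K (fun v => f (c :: v))) (seq 0 M)).
Proof.
  revert f. induction K; intros f.
  - rewrite ES_back, ES0. f_equal. apply map_ext; intros; rewrite ES0; reflexivity.
  - rewrite ES_back, IHK. f_equal. apply map_ext; intros d. f_equal.
    rewrite ES_back. reflexivity.
Qed.

Lemma ES_plus M p K f g : ES M p K (fun w => f w + g w) = ES M p K f + ES M p K g.
Proof. unfold ES. rewrite <- sumR_plus. f_equal. apply map_ext; intros; ring. Qed.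

Lemma ES_scal M p K a f : ES M p K (fun w => a * f w) = a * ES M p K f.
Proof. unfold ES. rewrite <- sumR_scal. f_equal. apply map_ext; intros; ring. Qed.

Lemma ES_ext_len M p K f g : (forall w, length w = K -> f w = g w) -> ES M p K f = ES M p K g.
Proof.
  revert f g; induction K; intros f g H.
  - rewrite !ES0. apply H; reflexivity.
  - rewrite !ES_front. f_equal. apply map_ext; intros c. f_equal.
    apply IHK. intros w Hw. apply H. simpl; lia.
Qed.

Lemma ES_const M p K a : sumR (map p (seq 0 M)) = 1 -> ES M p K (fun _ => a) = a.
Proof.
  intros hs. induction K.
  - apply ES0.
  - rewrite ES_front. rewrite IHK. rewrite (sumR_ext_in _ (fun c => a * p c)) by (intros; ring).
    rewrite sumR_scal, hs. ring.
Qed.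

Lemma ES_le_len M p K f g : (forall i, (i < M)%nat -> 0 < p i <= 1) ->
  (forall w, length w = K -> f w <= g w) -> ES M p K f <= ES M p K g.
Proof.
  intros hp. revert f g; induction K; intros f g H.
  - rewrite !ES0. apply H; reflexivity.
  - rewrite !ES_front. apply sumR_le_in. intros c Hc. apply in_seq in Hc.
    destruct (hp c ltac:(lia)).
    apply Rmult_le_compat_l; [lra|]. apply IHK. intros w Hw. apply H. simpl; lia.
Qed.

Lemma ES_split M p a b f :
  ES M p (a + b) f = ES M p a (fun u => ES M p b (fun v => f (u ++ v))).
Proof.
  revert f; induction a; intros f.
  - simpl. rewrite ES0. reflexivity.
  - change (S a + b)%nat with (S (a + b)). rewrite !ES_front. f_equal. apply map_ext; intros c. rewrite IHa. reflexivity.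
Qed.

Lemma ES_sum_list {A} M p K (F : A -> list nat -> R) l :
  sumR (map p (seq 0 M)) = 1 ->
  ES M p K (fun w => sumR (map (fun j => F j w) l)) = sumR (map (fun j => ES M p K (F j)) l).
Proof.
  intros hs. induction l; simpl.
  - apply ES_const; auto.
  - rewrite ES_plus, IHl. reflexivity.
Qed.

Definition pos0 (c : nat) (v : list nat) : option nat :=
  find (fun k => Nat.eqb (nth k v 0%nat) c) (seq 0 (length v)).

Lemma find_map {A B} (f : B -> bool) (g : A -> B) l :
  find f (map g l) = option_map g (find (fun x => f (g x)) l).
Proof. induction l; simpl; auto. destruct (f (g a)); auto. Qed.

Lemma find_ext {A} (f g : A -> bool) l : (forall x, f x = g x) -> find f l = find g l.
Proof. intros H; induction l; simpl; auto. rewrite H, IHl; auto. Qed.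

Lemma shift1 d v c :
  find (fun k => Nat.eqb (nth k (d :: v) 0%nat) c) (seq 1 (length v)) = option_map S (pos0 c v).
Proof.
  rewrite <- seq_shift. rewrite find_map. reflexivity.
Qed.

Lemma pos0_cons c d v :
  pos0 c (d :: v) = if Nat.eqb d c then Some 0%nat else option_map S (pos0 c v).
Proof.
  unfold pos0 at 1. simpl length. simpl seq. simpl find. simpl nth at 1.
  destruct (Nat.eqb d c); auto. apply shift1.
Qed.

Lemma N_prefix_1 c v : N_prefix (c :: v) 1 = option_map S (pos0 c v).
Proof.
  unfold N_prefix. simpl. rewrite Nat.sub_0_r. rewrite <- shift1 with (d := c).
  reflexivity.
Qed.

Lemma N_prefix_app u v j : (1 <= j)%nat -> length u = (j - 1)%nat ->
  N_prefix (u ++ v) j = N_prefix v 1.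
Proof.
  intros Hj Hu. unfold N_prefix.
  rewrite app_nth2 by lia. rewrite Hu, Nat.sub_diag.
  rewrite length_app. replace (length u + length v - j)%nat with (length v - 1)%nat by lia.
  apply find_ext. intros k. rewrite app_nth2 by lia. rewrite Hu.
  replace (j - 1 + k - (j - 1))%nat with (1 - 1 + k)%nat by lia. reflexivity.
Qed.

Lemma ES_Nj M p (phi : option nat -> R) j L :
  sumR (map p (seq 0 M)) = 1 -> (1 <= j)%nat ->
  ES M p ((j - 1) + S L) (fun w => phi (N_prefix w j)) =
  sumR (map (fun c => p c * ES M p L (fun v => phi (option_map S (pos0 c v)))) (seq 0 M)).
Proof.
  intros hs Hj. rewrite ES_split.
  rewrite (ES_ext_len _ _ _ _ (fun _ => ES M p (S L) (fun v => phi (N_prefix v 1)))).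
  - rewrite ES_const by auto. rewrite ES_front. f_equal. apply map_ext; intros c.
    f_equal. apply ES_ext. intros v. rewrite N_prefix_1. reflexivity.
  - intros u Hu. apply ES_ext. intros v. rewrite N_prefix_app; auto.
Qed.

Lemma sum_if_p M p (c : nat) (X Y : R) (F : nat -> R) :
  sumR (map p (seq 0 M)) = 1 -> (c < M)%nat ->
  (forall d, F d = if Nat.eqb d c then X else Y) ->
  sumR (map (fun d => p d * F d) (seq 0 M)) = p c * X + (1 - p c) * Y.
Proof.
  intros hs hc HF.
  rewrite (sumR_ext_in _ (fun d => p d * Y + (if Nat.eqb d c then p d * (X - Y) else 0))).
  - rewrite sumR_plus. rewrite (sumR_ext_in (fun d => p d * Y) (fun d => Y * p d)) by (intros; ring).
    rewrite sumR_scal, hs. rewrite sumR_if with (f := fun d => p d * (X - Y)).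
    + ring.
    + apply seq_NoDup.
    + apply in_seq; lia.
  - intros d _. rewrite HF. destruct (Nat.eqb_spec d c); subst; ring.
Qed.

Fixpoint Sf (q : R) (s L : nat) : R :=
  match L with
  | O => 0
  | S L' => Sf q s L' + (1 - q) * q ^ L' * harmonic (L' + s)
  end.

Lemma Sf_front q s L : Sf q s (S L) = (1 - q) * harmonic s + q * Sf q (S s) L.
Proof.
  revert s; induction L; intros s.
  - simpl. ring.
  - change (Sf q s (S (S L))) with (Sf q s (S L) + (1 - q) * q ^ (S L) * harmonic (S L + s)).
    rewrite IHL. simpl Sf at 2. rewrite <- plus_n_Sm. simpl. ring.
Qed.

Definition Fh M p L c s :=
  ES M p L (fun v => match pos0 c v with Some i => harmonic (i + s) | None => 0 end).

Lemma Fh_eq M p L c s : sumR (map p (seq 0 M)) = 1 -> (c < M)%nat ->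
  Fh M p L c s = Sf (1 - p c) s L.
Proof.
  intros hs hc. revert s; induction L; intros s.
  - unfold Fh. rewrite ES0. reflexivity.
  - rewrite Sf_front. unfold Fh. rewrite ES_front.
    rewrite (sum_if_p M p c (harmonic s) (Fh M p L c (S s))); auto.
    + ring_simplify. rewrite IHL. ring.
    + intros d. rewrite (ES_ext _ _ _ _ (fun v => if Nat.eqb d c then harmonic s else
          match pos0 c v with Some i => harmonic (i + S s) | None => 0 end)).
      * destruct (Nat.eqb d c). apply ES_const; auto. reflexivity.
      * intros v. rewrite pos0_cons. destruct (Nat.eqb d c); auto.
        destruct (pos0 c v); simpl; auto. rewrite <- plus_n_Sm. reflexivity.
Qed.

Lemma Un_eq M p L c : sumR (map p (seq 0 M)) = 1 -> (c < M)%nat ->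
  ES M p L (fun v => match pos0 c v with Some _ => 0 | None => 1 end) = (1 - p c) ^ L.
Proof.
  intros hs hc. induction L.
  - rewrite ES0. reflexivity.
  - rewrite ES_front.
    rewrite (sum_if_p M p c 0 ((1 - p c) ^ L)); auto.
    + simpl. ring.
    + intros d. rewrite <- IHL. rewrite (ES_ext _ _ _ _ (fun v => if Nat.eqb d c then 0 else
          match pos0 c v with Some _ => 0 | None => 1 end)).
      * destruct (Nat.eqb d c). apply ES_const; auto. reflexivity.
      * intros v. rewrite pos0_cons. destruct (Nat.eqb d c); auto.
        destruct (pos0 c v); simpl; auto.
Qed.

Fixpoint Tn (N : nat) (x : R) : R :=
  match N with O => 0 | S N' => Tn N' x + x ^ (S N') / INR (S N') end.
Fixpoint Dn (N : nat) (x : R) : R :=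
  match N with O => 0 | S N' => Dn N' x + x ^ N' end.

Lemma Tn_deriv N x : is_derive (Tn N) x (Dn N x).
Proof.
  induction N; simpl.
  - apply (is_derive_const 0).
  - apply (is_derive_plus (Tn N) (fun x => x * x ^ N / INR (S N))); auto.
    auto_derive. 
    + exact I.
    + destruct N as [|m]. simpl; field.
      cbv beta iota. simpl pred. rewrite <- (S_INR (S m)).
      simpl pow. change (@eq R ((1 * (x * x ^ m) + x * (1 * (INR (S m) * x ^ m))) * / INR (S (S m))) (x * x ^ m)).
      rewrite (S_INR (S m)). field. rewrite S_INR. pose proof (pos_INR m). lra.
Qed.


Lemma Dn_mul N x : Dn N x * (1 - x) = 1 - x ^ N.
Proof. induction N; simpl; [ring|]. rewrite Rmult_plus_distr_r, IHN. ring. Qed.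

Lemma Tn_0 N : Tn N 0 = 0.
Proof. induction N; [reflexivity|]. change (Tn N 0 + 0 ^ S N / INR (S N) = 0). rewrite IHN, pow_i by lia. unfold Rdiv. ring. Qed.

Lemma f_deriv N x : x < 1 ->
  is_derive (fun y => - ln (1 - y) - Tn N y) x (x ^ N / (1 - x)).
Proof.
  intros Hx.
  assert (E : x ^ N / (1 - x) = / (1 - x) - Dn N x).
  { assert (1 - x <> 0) by lra.
    assert (Dn N x = (1 - x ^ N) / (1 - x)) as ->.
    { rewrite <- (Dn_mul N x). field; auto. }
    field; auto. }
  rewrite E.
  apply (is_derive_minus (fun y => - ln (1 - y)) (Tn N)); [|apply Tn_deriv].
  auto_derive. lra. 
  change (@eq R (- (- (1) * / (1 + - x))) (/ (1 - x))). unfold Rminus. ring.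
Qed.

Lemma Tn_bound N q : 0 <= q < 1 ->
  0 <= - ln (1 - q) - Tn N q <= q ^ N / (1 - q) * q.
Proof.
  intros Hq.
  destruct (MVT_gen (fun y => - ln (1 - y) - Tn N y) 0 q (fun y => y ^ N / (1 - y))) as [c [Hc Heq]].
  - intros x Hx. apply f_deriv. rewrite Rmax_right in Hx; lra.
  - intros x Hx. rewrite Rmax_right in Hx by lra. apply continuity_pt_filterlim.
    apply (ex_derive_continuous (fun y => - ln (1 - y) - Tn N y)).
    eexists. apply f_deriv. lra.
  - rewrite Rmin_left in Hc by lra. rewrite Rmax_right in Hc by lra.
    rewrite Tn_0, !Rminus_0_r, ln_1 in Heq.
    assert (Hc1 : 0 < 1 - c) by lra.
    assert (0 <= c ^ N) by (apply pow_le; lra).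
    assert (c ^ N <= q ^ N) by (apply pow_incr; lra).
    assert (/ (1 - c) <= / (1 - q)) by (apply Rinv_le_contravar; lra).
    assert (0 <= c ^ N / (1 - c)) by (apply Rmult_le_pos; [lra| left; apply Rinv_0_lt_compat; lra]).
    assert (c ^ N / (1 - c) <= q ^ N / (1 - q)).
    { unfold Rdiv. apply Rmult_le_compat; try lra. left; apply Rinv_0_lt_compat; lra. }
    split.
    + replace (- ln (1 - q) - Tn N q) with (c ^ N / (1 - c) * q) by lra.
      apply Rmult_le_pos; lra.
    + replace (- ln (1 - q) - Tn N q) with (c ^ N / (1 - c) * q) by lra.
      apply Rmult_le_compat_r; lra.
Qed.

Lemma Tn_lim q : 0 <= q < 1 -> is_lim_seq (fun N => Tn N q) (- ln (1 - q)).
Proof.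
  intros Hq.
  apply (is_lim_seq_le_le (fun N => - ln (1 - q) - q ^ N / (1 - q) * q) _ (fun _ => - ln (1 - q))).
  - intros N. pose proof (Tn_bound N q Hq). lra.
  - replace (Finite (- ln (1 - q))) with (Finite (- ln (1 - q) - 0 / (1 - q) * q)) by (f_equal; field; lra).
    apply is_lim_seq_minus'. apply is_lim_seq_const.
    apply is_lim_seq_mult'; [|apply is_lim_seq_const].
    apply is_lim_seq_mult'; [|apply is_lim_seq_const].
    apply is_lim_seq_geom. rewrite Rabs_pos_eq; lra.
  - apply is_lim_seq_const.
Qed.

Lemma nq_lim q : 0 <= q < 1 -> is_lim_seq (fun N => INR N * q ^ N) 0.
Proof.
  intros Hq. destruct (Req_dec q 0) as [H0|H0].
  - subst. apply is_lim_seq_incr_1.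
    apply is_lim_seq_ext with (fun _ => 0). intros N. simpl. ring.
    apply is_lim_seq_const.
  - assert (Hq' : 0 < q) by lra.
    set (a := fun N => INR (S N) * q ^ N).
    assert (Ha : is_lim_seq a 0).
    { apply ex_series_lim_0. apply ex_series_Rabs.
      apply (ex_series_DAlembert a q); [lra| |].
      - intros N. unfold a. apply Rmult_integral_contrapositive. split.
        apply not_0_INR; lia. apply pow_nonzero; lra.
      - apply is_lim_seq_ext with (fun N => q * (1 + / INR (S N))).
        + intros N. unfold a. rewrite Rabs_pos_eq.
          * rewrite (S_INR (S N)). simpl pow. field. split. apply pow_nonzero; lra.
            apply not_0_INR; lia.
          * unfold Rdiv. apply Rmult_le_pos. apply Rmult_le_pos. apply pos_INR. apply pow_le; lra.
            left. apply Rinv_0_lt_compat. apply Rmult_lt_0_compat. apply lt_0_INR; lia.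
            apply pow_lt; lra.
        + replace (Finite q) with (Finite (q * (1 + 0))) by (f_equal; ring).
          apply is_lim_seq_mult'. apply is_lim_seq_const. apply is_lim_seq_plus'. apply is_lim_seq_const.
          apply (is_lim_seq_incr_1 (fun N => / INR N)).
          replace (Finite 0) with (Rbar_inv p_infty) by reflexivity.
          apply is_lim_seq_inv. apply is_lim_seq_INR. discriminate. }
    apply (is_lim_seq_le_le (fun _ => 0) _ a).
    + intros N. unfold a. split. apply Rmult_le_pos. apply pos_INR. apply pow_le; lra.
      apply Rmult_le_compat_r. apply pow_le; lra. rewrite S_INR; lra.
    + apply is_lim_seq_const.
    + exact Ha.
Qed.

Lemma harm_nonneg L : 0 <= harmonic L.
Proof.
  induction L; [simpl; lra|]. change (harmonic (S L)) with (harmonic L + / INR (S L)). assert (0 < / INR (S L)) by (apply Rinv_0_lt_compat, lt_0_INR; lia). lra.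
Qed.

Lemma harm_mono a b : (a <= b)%nat -> harmonic a <= harmonic b.
Proof.
  induction 1; [lra|]. change (harmonic (S m)) with (harmonic m + / INR (S m)). assert (0 < / INR (S m)) by (apply Rinv_0_lt_compat, lt_0_INR; lia). lra.
Qed.

Lemma harm_le L : harmonic L <= INR L.
Proof.
  induction L; [simpl; lra|]. change (harmonic (S L)) with (harmonic L + / INR (S L)).
  pose proof (S_INR L).
  assert (/ INR (S L) <= 1).
  { rewrite <- Rinv_1. apply Rinv_le_contravar; [lra|]. rewrite S_INR. pose proof (pos_INR L). lra. }
  lra.
Qed.

Lemma Sf0_eq q L : Sf q 0 L = Tn L q - q ^ L * harmonic L.
Proof.
  induction L.
  - simpl. ring.
  - change (Sf q 0 (S L)) with (Sf q 0 L + (1 - q) * q ^ L * harmonic (L + 0)).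
    rewrite IHL. rewrite Nat.add_0_r.
    change (Tn (S L) q) with (Tn L q + q ^ (S L) / INR (S L)).
    change (harmonic (S L)) with (harmonic L + / INR (S L)).
    assert (INR (S L) <> 0) by (apply not_0_INR; lia).
    simpl pow. field. auto.
Qed.

Lemma Sf_lim pc : 0 < pc <= 1 -> is_lim_seq (fun L => Sf (1 - pc) 0 L) (- ln pc).
Proof.
  intros Hp. set (q := 1 - pc). assert (Hq : 0 <= q < 1) by (unfold q; lra).
  replace pc with (1 - q) by (unfold q; ring).
  apply is_lim_seq_ext with (fun L => Tn L q - q ^ L * harmonic L).
  { intros; symmetry; apply Sf0_eq. }
  replace (Finite (- ln (1 - q))) with (Finite (- ln (1 - q) - 0)) by (f_equal; ring).
  apply is_lim_seq_minus'. apply Tn_lim; auto.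
  apply (is_lim_seq_le_le (fun _ => 0) _ (fun L => INR L * q ^ L)).
  - intros L. assert (0 <= q ^ L) by (apply pow_le; lra). pose proof (harm_nonneg L).
    pose proof (harm_le L). split. apply Rmult_le_pos; lra.
    rewrite Rmult_comm. apply Rmult_le_compat_r; lra.
  - apply is_lim_seq_const.
  - apply nq_lim; auto.
Qed.

Definition phiG (o : option nat) : R := match o with Some k => harmonic (k - 1) | None => 0 end.
Definition phiU (o : option nat) : R := match o with Some _ => 0 | None => 1 end.
Definition G j w := phiG (N_prefix w j).
Definition U j w := phiU (N_prefix w j).

Lemma EG M p n j L : sumR (map p (seq 0 M)) = 1 -> (forall i, (i < M)%nat -> 0 < p i <= 1) ->
  (1 <= j <= n)%nat ->
  ES M p (L + n) (G j) = sumR (map (fun c => p c * Sf (1 - p c) 0 (L + (n - j))) (seq 0 M)).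
Proof.
  intros hs hp Hj. replace (L + n)%nat with ((j - 1) + S (L + (n - j)))%nat by lia.
  unfold G. rewrite ES_Nj by (auto; lia). apply sumR_ext_in. intros c Hc. apply in_seq in Hc.
  f_equal. rewrite <- Fh_eq with (M := M) by (auto; lia). unfold Fh. apply ES_ext. intros v.
  destruct (pos0 c v); simpl; auto. rewrite Nat.sub_0_r, Nat.add_0_r. reflexivity.
Qed.

Lemma EU M p n j L : sumR (map p (seq 0 M)) = 1 -> (forall i, (i < M)%nat -> 0 < p i <= 1) ->
  (1 <= j <= n)%nat ->
  ES M p (L + n) (U j) = sumR (map (fun c => p c * (1 - p c) ^ (L + (n - j))) (seq 0 M)).
Proof.
  intros hs hp Hj. replace (L + n)%nat with ((j - 1) + S (L + (n - j)))%nat by lia.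
  unfold U. rewrite ES_Nj by (auto; lia). apply sumR_ext_in. intros c Hc. apply in_seq in Hc.
  f_equal. rewrite <- Un_eq with (M := M) by (auto; lia). apply ES_ext. intros v.
  destruct (pos0 c v); simpl; auto.
Qed.

Lemma Ns_some w n l : Ns_prefix w n = Some l ->
  sumR (map (fun k => harmonic (k - 1)) l) = sumR (map (fun j => G j w) (seq 1 n)).
Proof.
  revert l; induction n; intros l H.
  - simpl in H. inversion H. reflexivity.
  - simpl in H. destruct (Ns_prefix w n) as [l'|] eqn:E1; [|discriminate].
    destruct (N_prefix w (S n)) as [k|] eqn:E2; [|discriminate].
    inversion H; subst. rewrite seq_S, !map_app, !sumR_app, (IHn l' eq_refl).
    simpl. unfold G. rewrite ?Nat.add_1_l, E2. reflexivity.
Qed.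

Lemma U_nonneg j w : 0 <= U j w.
Proof. unfold U, phiU. destruct (N_prefix w j); lra. Qed.

Lemma sumU_nonneg w l : 0 <= sumR (map (fun j => U j w) l).
Proof. induction l; simpl; [lra|]. pose proof (U_nonneg a w). lra. Qed.

Lemma Ns_none w n : Ns_prefix w n = None -> 1 <= sumR (map (fun j => U j w) (seq 1 n)).
Proof.
  induction n; intros H.
  - discriminate.
  - simpl in H. rewrite seq_S, map_app, sumR_app.
    replace (1 + n)%nat with (S n) by lia.
    change (sumR (map (fun j => U j w) [S n])) with (U (S n) w + 0).
    pose proof (sumU_nonneg w (seq 1 n)). pose proof (U_nonneg (S n) w).
    destruct (Ns_prefix w n) as [l'|] eqn:E1.
    + destruct (N_prefix w (S n)) as [k|] eqn:E2; [discriminate|].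
      assert (U (S n) w = 1) by (unfold U; rewrite E2; reflexivity). lra.
    + pose proof (IHn eq_refl). lra.
Qed.

Lemma G_bound j w : 0 <= G j w <= harmonic (length w).
Proof.
  unfold G, phiG, N_prefix. destruct (find _ _) as [k|] eqn:E.
  - apply find_some in E. destruct E as [E _]. apply in_seq in E.
    split. apply harm_nonneg. apply harm_mono. lia.
  - split; [lra|]. apply harm_nonneg.
Qed.

Lemma sum_bound {A} (f : A -> R) c l : (forall x, f x <= c) -> sumR (map f l) <= INR (length l) * c.
Proof.
  intros H. rewrite <- sumR_const. apply sumR_le_in. auto.
Qed.

Lemma sumG_nonneg w l : 0 <= sumR (map (fun j => G j w) l).
Proof. induction l; simpl; [lra|]. pose proof (G_bound a w). lra. Qed.

Lemma pointwise n w : (1 <= n)%nat ->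
  / INR n * sumR (map (fun j => G j w) (seq 1 n)) - harmonic (length w) * sumR (map (fun j => U j w) (seq 1 n))
  <= H3_trunc n w <= / INR n * sumR (map (fun j => G j w) (seq 1 n)).
Proof.
  intros Hn. assert (Hn0 : 0 < INR n) by (apply lt_0_INR; lia).
  pose proof (harm_nonneg (length w)). pose proof (sumU_nonneg w (seq 1 n)).
  pose proof (sumG_nonneg w (seq 1 n)).
  assert (0 < / INR n) by (apply Rinv_0_lt_compat; auto).
  unfold H3_trunc. destruct (Ns_prefix w n) as [l|] eqn:E.
  - rewrite (Ns_some w n l E). assert (0 <= harmonic (length w) * sumR (map (fun j => U j w) (seq 1 n))) by (apply Rmult_le_pos; auto). lra.
  - pose proof (Ns_none w n E).
    assert (Hb : sumR (map (fun j => G j w) (seq 1 n)) <= INR n * harmonic (length w)).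
    { rewrite <- (length_seq n 1) at 2. apply sum_bound. intros; apply G_bound. }
    assert (/ INR n * sumR (map (fun j => G j w) (seq 1 n)) <= harmonic (length w)).
    { apply (Rmult_le_reg_l (INR n)); auto. rewrite <- Rmult_assoc, Rinv_r by lra. lra. }
    assert (harmonic (length w) <= harmonic (length w) * sumR (map (fun j => U j w) (seq 1 n))).
    { rewrite <- (Rmult_1_r (harmonic (length w))) at 1. apply Rmult_le_compat_l; auto. }
    split; [lra|]. apply Rmult_le_pos; lra.
Qed.

Lemma lim_sum_list (l : list nat) (u : nat -> nat -> R) (lim : nat -> R) :
  (forall x, In x l -> is_lim_seq (fun L => u x L) (lim x)) ->
  is_lim_seq (fun L => sumR (map (fun x => u x L) l)) (sumR (map lim l)).
Proof.
  induction l as [|a l IH]; intros H; simpl.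
  - apply is_lim_seq_const.
  - apply is_lim_seq_plus'. apply H; simpl; auto. apply IH. intros; apply H; simpl; auto.
Qed.

Lemma ent_lim M p d : (forall i, (i < M)%nat -> 0 < p i <= 1) ->
  is_lim_seq (fun L => sumR (map (fun c => p c * Sf (1 - p c) 0 (L + d)) (seq 0 M))) (entropy M p).
Proof.
  intros hp. unfold entropy. rewrite <- sumR_opp.
  rewrite (sumR_ext_in (fun x => - (p x * ln (p x))) (fun c => p c * - ln (p c))) by (intros; ring).
  apply lim_sum_list. intros c Hc. apply in_seq in Hc.
  apply is_lim_seq_mult'. apply is_lim_seq_const.
  apply (is_lim_seq_incr_n (fun L => Sf (1 - p c) 0 L)). apply Sf_lim. apply hp; lia.
Qed.

Lemma tail_lim pc n d : 0 < pc <= 1 ->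
  is_lim_seq (fun L => harmonic (L + n) * (pc * (1 - pc) ^ (L + d))) 0.
Proof.
  intros Hp. set (q := 1 - pc). assert (Hq : 0 <= q < 1) by (unfold q; lra).
  apply (is_lim_seq_le_le (fun _ => 0) _ (fun L => pc * ((INR L * q ^ L) * q ^ d + INR n * q ^ L * q ^ d))).
  - intros L. assert (0 <= q ^ L) by (apply pow_le; lra). assert (0 <= q ^ d) by (apply pow_le; lra).
    pose proof (harm_nonneg (L + n)). pose proof (harm_le (L + n)).
    rewrite pow_add. split.
    + apply Rmult_le_pos; auto. apply Rmult_le_pos; [lra|]. apply Rmult_le_pos; auto.
    + rewrite plus_INR in *.
      replace (pc * (INR L * q ^ L * q ^ d + INR n * q ^ L * q ^ d)) with
        ((INR L + INR n) * (pc * (q ^ L * q ^ d))) by ring.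
      apply Rmult_le_compat_r; auto. apply Rmult_le_pos; [lra|]. apply Rmult_le_pos; auto.
  - apply is_lim_seq_const.
  - replace (Finite 0) with (Finite (pc * (0 * q ^ d + INR n * 0 * q ^ d))) by (f_equal; ring).
    apply is_lim_seq_mult'. apply is_lim_seq_const.
    apply is_lim_seq_plus'.
    + apply is_lim_seq_mult'; [|apply is_lim_seq_const]. apply nq_lim; auto.
    + apply is_lim_seq_mult'; [|apply is_lim_seq_const].
      apply is_lim_seq_mult'. apply is_lim_seq_const.
      apply is_lim_seq_geom. rewrite Rabs_pos_eq; lra.
Qed.

Theorem mainTheorem3 (M : nat) (p : nat -> R) (n : nat)
  (hM : (1 <= M)%nat)
  (hp : forall i, (i < M)%nat -> 0 < p i <= 1)
  (hsum : sumR (map p (seq 0 M)) = 1)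
  (hn : (1 <= n)%nat) :
  Un_cv (fun K => E_H3_trunc M p n K) (entropy M p).
Proof.
  apply is_lim_seq_Reals. apply (is_lim_seq_incr_n _ n).
  set (Up := fun L => / INR n * sumR (map (fun j => ES M p (L + n) (G j)) (seq 1 n))).
  set (Tl := fun L => harmonic (L + n) * sumR (map (fun j => ES M p (L + n) (U j)) (seq 1 n))).
  assert (HUp : is_lim_seq Up (entropy M p)).
  { unfold Up.
    apply is_lim_seq_ext with (fun L => / INR n *
       sumR (map (fun j => sumR (map (fun c => p c * Sf (1 - p c) 0 (L + (n - j))) (seq 0 M))) (seq 1 n))).
    { intros L. f_equal. apply sumR_ext_in. intros j Hj. apply in_seq in Hj.
      symmetry. apply EG; auto; lia. }
    replace (Finite (entropy M p)) with (Finite (/ INR n * sumR (map (fun _ => entropy M p) (seq 1 n)))).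
    2:{ f_equal. rewrite sumR_const, length_seq. field. apply not_0_INR; lia. }
    apply is_lim_seq_mult'. apply is_lim_seq_const.
    apply lim_sum_list. intros j _. apply ent_lim; auto. }
  assert (HTl : is_lim_seq Tl 0).
  { unfold Tl.
    apply is_lim_seq_ext with (fun L =>
       sumR (map (fun j => sumR (map (fun c => harmonic (L + n) * (p c * (1 - p c) ^ (L + (n - j)))) (seq 0 M))) (seq 1 n))).
    { intros L. rewrite <- sumR_scal. apply sumR_ext_in. intros j Hj. apply in_seq in Hj.
      rewrite EU by (auto; lia). rewrite sumR_scal. reflexivity. }
    replace (Finite 0) with (Finite (sumR (map (fun _ => sumR (map (fun _ => 0) (seq 0 M))) (seq 1 n)))).
    2:{ f_equal. rewrite !sumR_const. ring. }
    apply lim_sum_list. intros j _. apply lim_sum_list. intros c Hc. apply in_seq in Hc.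
    apply tail_lim. apply hp; lia. }
  apply (is_lim_seq_le_le (fun L => Up L - Tl L) _ Up).
  - intros L. unfold E_H3_trunc. fold (ES M p (L + n) (H3_trunc n)). split.
    + unfold Up, Tl.
      rewrite <- !ES_sum_list by auto.
      apply Rle_trans with (ES M p (L + n) (fun w => / INR n * sumR (map (fun j => G j w) (seq 1 n)) +
             (- harmonic (L + n)) * sumR (map (fun j => U j w) (seq 1 n)))).
      { right. rewrite ES_plus, !ES_scal. ring. }
      apply ES_le_len; auto. intros w Hw.
      pose proof (pointwise n w hn) as [H1 H2]. rewrite Hw in H1. lra.
    + unfold Up. rewrite <- ES_sum_list by auto. rewrite <- ES_scal.
      apply ES_le_len; auto. intros w Hw. apply (pointwise n w hn).
  - replace (Finite (entropy M p)) with (Finite (entropy M p - 0)) by (f_equal; ring).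
    apply is_lim_seq_minus'; auto.
  - exact HUp.
Qed.
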